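(* Let $M,K\in\mathbb R^{n\times n}$ be symmetric positive definite, $\nu>0$, $\omega\ge0$, and \[ \mathcal M=\begin{bmatrix}M&\sqrt\nu(K-i\omega M)\\\sqrt\nu(K+i\omega M)&-M\end{bmatrix}\in\mathbb C^{2n\times2n}. \] (1) For $\mathcal P=\mathrm{diag}(P,P)$ with any real symmetric positive definite $P\in\mathbb R^{n\times n}$, the spectrum of $\mathcal P^{-1}\mathcal M$ is real and symmetric with respect to zero. (2) For $P=M+\sqrt\nu(K+\omega M)$ and $\mathcal P=\mathrm{diag}(P,P)$, the inf-sup constant $\gamma=\inf_{0\ne x}\sup_{0\ne w}\frac{|\langle\mathcal Mx,w\rangle|}{\|x\|_{\mathcal P}\|w\|_{\mathcal P}}$ and the norm $\|\mathcal B\|=\sup_{0\ne x}\sup_{0\ne w}\frac{|\langle\mathcal Mx,w\rangle|}{\|x\|_{\mathcal P}\|w\|_{\mathcal P}}$ satisfy \[ \gamma\ge\frac1{\sqrt3},\qquad\|\mathcal B\|\le1. \] Consequently every eigenvalue of $\mathcal P^{-1}\mathcal M$ lies in $[-1,-1/\sqrt3]\cup[1/\sqrt3,1]$.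
   Context: $\langle z,w\rangle=w^*z$ on $\mathbb C^{2n}$ and $\|x\|_{\mathcal P}=\langle\mathcal Px,x\rangle^{1/2}$; $x,w$ range over $\mathbb C^{2n}$. *)

(* Defs.v *)
(* Complex numbers: an arbitrary numClosedFieldType C
   (e.g. algC); "real" means \is Num.real. *)
From HB Require Import structures.
From mathcomp Require Import all_boot all_order all_algebra.
Set Implicit Arguments. Unset Strict Implicit. Unset Printing Implicit Defensive.
Import Order.TTheory GRing.Theory Num.Theory.
Local Open Scope ring_scope.

Definition inner (C : numClosedFieldType) (m : nat) (z w : 'cV[C]_m) : C :=
  \sum_(i < m) z i ord0 * (w i ord0)^*.

Definition pnorm (C : numClosedFieldType) (m : nat) (P : 'M[C]_m) (x : 'cV[C]_m) : C :=
  sqrtC (inner (P *m x) x).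

Definition realmx (C : numClosedFieldType) (m : nat) (A : 'M[C]_m) : Prop :=
  forall i j, A i j \is Num.real.

Definition real_spd (C : numClosedFieldType) (n : nat) (A : 'M[C]_n) : Prop :=
  [/\ realmx A, A^T = A &
      forall x : 'cV[C]_n, (forall i, x i ord0 \is Num.real) -> x != 0 ->
        0 < (x^T *m A *m x) ord0 ord0].

Definition calM (C : numClosedFieldType) (n : nat) (M K : 'M[C]_n) (nu om : C)
  : 'M[C]_(n + n) :=
  block_mx M (sqrtC nu *: (K - ('i * om) *: M))
           (sqrtC nu *: (K + ('i * om) *: M)) (- M).

Definition calP (C : numClosedFieldType) (n : nat) (P : 'M[C]_n) : 'M[C]_(n + n) :=
  block_mx P 0 0 P.

Definition rayq (C : numClosedFieldType) (m : nat) (A P : 'M[C]_m) (x w : 'cV[C]_m) : C :=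
  `| inner (A *m x) w | / (pnorm P x * pnorm P w).

(* Main.v *)
Require Import Defs.
From HB Require Import structures.
From mathcomp Require Import all_boot all_order all_algebra ring.
Import Order.TTheory GRing.Theory Num.Theory.
Local Open Scope ring_scope.
Set Implicit Arguments. Unset Strict Implicit. Unset Printing Implicit Defensive.

Section Lin.
Variable C : numClosedFieldType.

Definition cjm m n (A : 'M[C]_(m,n)) : 'M[C]_(m,n) := map_mx Num.conj A.
Definition adjm m n (A : 'M[C]_(m,n)) : 'M[C]_(n,m) := (cjm A)^T.
Definition ip m (z w : 'cV[C]_m) : C := (adjm w *m z) 0 0.

Lemma innerE m (z w : 'cV[C]_m) : inner z w = ip z w.
Proof. rewrite /inner /ip /adjm /cjm !mxE; apply: eq_bigr => i _; by rewrite !mxE mulrC. Qed.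

Lemma cjmK m n : involutive (@cjm m n).
Proof. by move=> A; apply/matrixP=> i j; rewrite !mxE conjCK. Qed.
Lemma cjmD m n (A B : 'M[C]_(m,n)) : cjm (A + B) = cjm A + cjm B.
Proof. exact: map_mxD. Qed.
Lemma cjmN m n (A : 'M[C]_(m,n)) : cjm (- A) = - cjm A.
Proof. exact: map_mxN. Qed.
Lemma cjmB m n (A B : 'M[C]_(m,n)) : cjm (A - B) = cjm A - cjm B.
Proof. by rewrite cjmD cjmN. Qed.
Lemma cjmZ m n k (A : 'M[C]_(m,n)) : cjm (k *: A) = k^* *: cjm A.
Proof. exact: map_mxZ. Qed.
Lemma cjmM m n p (A : 'M[C]_(m,n)) (B : 'M[C]_(n,p)) : cjm (A *m B) = cjm A *m cjm B.
Proof. exact: map_mxM. Qed.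
Lemma cjmT m n (A : 'M[C]_(m,n)) : cjm A^T = (cjm A)^T.
Proof. by rewrite /cjm map_trmx. Qed.

Lemma adjmK m n : cancel (@adjm m n) (@adjm n m).
Proof. by move=> A; rewrite /adjm cjmT trmxK cjmK. Qed.
Lemma adjmD m n (A B : 'M[C]_(m,n)) : adjm (A + B) = adjm A + adjm B.
Proof. by rewrite /adjm cjmD linearD. Qed.
Lemma adjmN m n (A : 'M[C]_(m,n)) : adjm (- A) = - adjm A.
Proof. by rewrite /adjm cjmN linearN. Qed.
Lemma adjmB m n (A B : 'M[C]_(m,n)) : adjm (A - B) = adjm A - adjm B.
Proof. by rewrite adjmD adjmN. Qed.
Lemma adjmZ m n k (A : 'M[C]_(m,n)) : adjm (k *: A) = k^* *: adjm A.
Proof. by rewrite /adjm cjmZ linearZ. Qed.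
Lemma adjmM m n p (A : 'M[C]_(m,n)) (B : 'M[C]_(n,p)) : adjm (A *m B) = adjm B *m adjm A.
Proof. by rewrite /adjm cjmM trmx_mul. Qed.
Lemma adjm_inj m n : injective (@adjm m n).
Proof. exact: can_inj (@adjmK m n). Qed.
Lemma adjm0 m n : adjm (0 : 'M[C]_(m,n)) = 0.
Proof. by apply/matrixP=> i j; rewrite !mxE conjC0. Qed.

Lemma ipDl m (z1 z2 w : 'cV[C]_m) : ip (z1 + z2) w = ip z1 w + ip z2 w.
Proof. by rewrite /ip mulmxDr mxE. Qed.
Lemma ipZl m k (z w : 'cV[C]_m) : ip (k *: z) w = k * ip z w.
Proof. by rewrite /ip -scalemxAr mxE. Qed.
Lemma ipNl m (z w : 'cV[C]_m) : ip (- z) w = - ip z w.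
Proof. by rewrite -scaleN1r ipZl mulN1r. Qed.
Lemma ipBl m (z1 z2 w : 'cV[C]_m) : ip (z1 - z2) w = ip z1 w - ip z2 w.
Proof. by rewrite ipDl ipNl. Qed.
Lemma ipDr m (z w1 w2 : 'cV[C]_m) : ip z (w1 + w2) = ip z w1 + ip z w2.
Proof. by rewrite /ip adjmD mulmxDl mxE. Qed.
Lemma ipZr m k (z w : 'cV[C]_m) : ip z (k *: w) = k^* * ip z w.
Proof. by rewrite /ip adjmZ -scalemxAl mxE. Qed.
Lemma ipNr m (z w : 'cV[C]_m) : ip z (- w) = - ip z w.
Proof. by rewrite /ip adjmN mulNmx mxE. Qed.
Lemma ipBr m (z w1 w2 : 'cV[C]_m) : ip z (w1 - w2) = ip z w1 - ip z w2.
Proof. by rewrite ipDr ipNr. Qed.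
Lemma ip0l m (w : 'cV[C]_m) : ip 0 w = 0.
Proof. by rewrite /ip mulmx0 mxE. Qed.
Lemma ip0r m (w : 'cV[C]_m) : ip w 0 = 0.
Proof. by rewrite /ip adjm0 mul0mx mxE. Qed.

Lemma ip_conj m (z w : 'cV[C]_m) : (ip z w)^* = ip w z.
Proof.
rewrite /ip.
have E : ((adjm w *m z) 0 0)^* = (cjm (adjm w *m z)) 0 0.
 by rewrite /cjm [RHS]mxE.
rewrite E cjmM /adjm cjmT cjmK.
have T1 : forall B : 'M[C]_1, B^T 0 0 = B 0 0 by move=> B; rewrite mxE.
by rewrite -[RHS]T1 trmx_mul trmxK.
Qed.

Lemma ip_adj m (A : 'M[C]_m) (z w : 'cV[C]_m) : ip (A *m z) w = ip z (adjm A *m w).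
Proof. by rewrite /ip adjmM adjmK mulmxA. Qed.

Lemma ip_col m1 m2 (a c : 'cV[C]_m1) (b d : 'cV[C]_m2) :
  ip (col_mx a b) (col_mx c d) = ip a c + ip b d.
Proof.
by rewrite /ip /adjm /cjm map_col_mx tr_col_mx mul_row_col mxE.
Qed.

Definition herm m (A : 'M[C]_m) := adjm A = A.

Lemma ip_herm m (Q : 'M[C]_m) a b : herm Q -> (ip (Q *m a) b)^* = ip (Q *m b) a.
Proof. by move=> hQ; rewrite ip_conj ip_adj hQ. Qed.


Lemma spd_cjm n (Q : 'M[C]_n) : real_spd Q -> cjm Q = Q.
Proof. by case=> hr _ _; apply/matrixP=> i j; rewrite /cjm [LHS]mxE conj_Creal. Qed.

Lemma spd_herm n (Q : 'M[C]_n) : real_spd Q -> herm Q.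
Proof. by move=> hQ; rewrite /herm /adjm spd_cjm //; case: hQ. Qed.

Lemma ip_realvec n (Q : 'M[C]_n) (x : 'cV[C]_n) :
  cjm x = x -> (x^T *m Q *m x) 0 0 = ip (Q *m x) x.
Proof. by move=> hx; rewrite /ip /adjm hx mulmxA. Qed.

Lemma ip_real n (Q : 'M[C]_n) (a b : 'cV[C]_n) :
  cjm Q = Q -> cjm a = a -> cjm b = b -> (ip (Q *m a) b)^* = ip (Q *m a) b.
Proof.
move=> hQ ha hb; rewrite /ip.
have E : ((adjm b *m (Q *m a)) 0 0)^* = (cjm (adjm b *m (Q *m a))) 0 0 by rewrite /cjm [RHS]mxE.
by rewrite E !cjmM hQ ha /adjm cjmT !hb.
Qed.

Lemma sqrCi' : ('i : C) * 'i = -1.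
Proof. by rewrite -expr2 sqrCi. Qed.

Lemma qf_realpos n (Q : 'M[C]_n) (v : 'cV[C]_n) : real_spd Q -> cjm v = v ->
  0 <= ip (Q *m v) v /\ (v != 0 -> 0 < ip (Q *m v) v).
Proof.
move=> [hr hT hp] hv.
have hpos : v != 0 -> 0 < ip (Q *m v) v.
  move=> nz; rewrite -ip_realvec //; apply: hp nz => i.
  by apply/CrealP; rewrite -[in RHS]hv /cjm mxE.
split=> //; case: (eqVneq v 0) => [->|nz]; last exact: ltW (hpos nz).
by rewrite mulmx0 ip0l.
Qed.

Lemma spd_pos n (Q : 'M[C]_n) (z : 'cV[C]_n) : real_spd Q -> z != 0 -> 0 < ip (Q *m z) z.
Proof.
move=> hQ nz.
pose a := map_mx (fun x => 'Re x) z; pose b := map_mx (fun x => 'Im x) z.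
have Ez : z = a + 'i *: b by apply/matrixP=> i j; rewrite !mxE -Crect.
have ha : cjm a = a by apply/matrixP=> i j; rewrite /cjm !mxE conj_Creal // Creal_Re.
have hb : cjm b = b by apply/matrixP=> i j; rewrite /cjm !mxE conj_Creal // Creal_Im.
have hQc := spd_cjm hQ.
have Hab : ip (Q *m a) b = ip (Q *m b) a.
  by rewrite -ip_real // ip_herm //; exact: spd_herm.
have -> : ip (Q *m z) z = ip (Q *m a) a + ip (Q *m b) b.
  rewrite Ez mulmxDr -scalemxAr ipDl ipDr ipDr ipZl ipZl ipZr ipZr Hab conjCi.
  by have := sqrCi' ; move=> H; ring: H.
have [a0 ap] := qf_realpos hQ ha; have [b0 bp] := qf_realpos hQ hb.
case: (eqVneq a 0) => [a0'|anz]; last exact: ltr_wpDr (ap anz).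
case: (eqVneq b 0) => [b0'|bnz]; last exact: ltr_wpDl (bp bnz).
by move: nz; rewrite Ez a0' b0' scaler0 addr0 eqxx.
Qed.

Lemma qf_ge0 n (Q : 'M[C]_n) (z : 'cV[C]_n) : real_spd Q -> 0 <= ip (Q *m z) z.
Proof.
move=> hQ; case: (eqVneq z 0) => [->|nz]; first by rewrite mulmx0 ip0l.
exact: ltW (spd_pos hQ nz).
Qed.

Lemma CS m (Q : 'M[C]_m) (x y : 'cV[C]_m) : herm Q ->
  (forall z, z != 0 -> 0 < ip (Q *m z) z) ->
  `|ip (Q *m x) y| ^+ 2 <= ip (Q *m x) x * ip (Q *m y) y.
Proof.
move=> hQ hp.
case: (eqVneq x 0) => [->|nz]; first by rewrite mulmx0 !ip0l normr0 expr0n mul0r.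
have apos := hp _ nz.
set a := ip (Q *m x) x; set c := ip (Q *m x) y; set b := ip (Q *m y) y.
have ar : a^* = a by apply: conj_Creal; apply: gtr0_real.
have hyx : ip (Q *m y) x = c^* by rewrite ip_herm.
pose v := a *: y - c^* *: x.
have hv : 0 <= ip (Q *m v) v.
  case: (eqVneq v 0) => [->|vnz]; first by rewrite mulmx0 ip0l.
  exact: ltW (hp _ vnz).
have Ev : ip (Q *m v) v = a * (a * b - c * c^*).
  rewrite /v mulmxBr -!scalemxAr ipBl !ipBr !ipZl !ipZr ar conjCK hyx -/a -/b -/c.
  ring.
by move: hv; rewrite Ev pmulr_rge0 // subr_ge0 normCK.
Qed.


Lemma real_sq_ge0 (x : C) : x \is Num.real -> 0 <= x ^+ 2.
Proof. by rewrite realEsqr. Qed.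

Lemma L2 (c1 c2 p1 p2 q1 q2 : C) : 0 <= p1 -> 0 <= p2 -> 0 <= q1 -> 0 <= q2 ->
  `|c1| ^+ 2 <= p1 * q1 -> `|c2| ^+ 2 <= p2 * q2 ->
  `|c1 + c2| ^+ 2 <= (p1 + p2) * (q1 + q2).
Proof.
move=> hp1 hp2 hq1 hq2 h1 h2.
set u1 := `|c1|; set u2 := `|c2|.
have u10 : 0 <= u1 by exact: normr_ge0. have u20 : 0 <= u2 by exact: normr_ge0.
have st1 : `|c1 + c2| ^+ 2 <= (u1 + u2) ^+ 2.
  by rewrite ler_pXn2r // ?nnegrE ?addr_ge0 //; exact: ler_normD.
apply: (le_trans st1).
have st2 : 2 * u1 * u2 <= p1 * q2 + p2 * q1.
  rewrite -(ler_pXn2r (_ : 0 < 2)%N) ?nnegrE ?addr_ge0 ?mulr_ge0 //.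
  apply: (@le_trans _ _ (4 * ((p1 * q2) * (p2 * q1)))).
    have -> : (2 * u1 * u2) ^+ 2 = 4 * (u1 ^+ 2 * u2 ^+ 2) by ring.
    rewrite ler_wpM2l //; have -> : p1 * q2 * (p2 * q1) = (p1 * q1) * (p2 * q2) by ring.
    by apply: ler_pM => //; apply: exprn_ge0.
  rewrite -subr_ge0.
  have -> : (p1 * q2 + p2 * q1) ^+ 2 - 4 * (p1 * q2 * (p2 * q1)) = (p1 * q2 - p2 * q1) ^+ 2 by ring.
  by apply: real_sq_ge0; apply: rpredB; apply: ger0_real; apply: mulr_ge0.
have -> : (u1 + u2) ^+ 2 = u1 ^+ 2 + u2 ^+ 2 + 2 * u1 * u2 by ring.
have -> : (p1 + p2) * (q1 + q2) = p1 * q1 + p2 * q2 + (p1 * q2 + p2 * q1) by ring.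
by rewrite lerD // lerD.
Qed.

Lemma Lscale (k c p q : C) : `|c| ^+ 2 <= p * q -> `|k * c| ^+ 2 <= (`|k| * p) * (`|k| * q).
Proof.
move=> h; rewrite normrM exprMn.
have -> : `|k| * p * (`|k| * q) = `|k| ^+ 2 * (p * q) by ring.
by rewrite ler_wpM2l // exprn_ge0.
Qed.

Lemma CS_sqrt (c X W : C) : 0 <= X -> 0 <= W -> `|c| ^+ 2 <= X * W ->
  `|c| <= sqrtC X * sqrtC W.
Proof.
move=> hX hW h; rewrite -sqrtCM ?nnegrE // -(sqrCK (normr_ge0 c)).
by rewrite ler_sqrtC ?nnegrE ?exprn_ge0 ?mulr_ge0.
Qed.


Definition Am n (M K : 'M[C]_n) (s om : C) : 'M[C]_(n + n) :=
  block_mx M (s *: (K - ('i * om) *: M)) (s *: (K + ('i * om) *: M)) (- M).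
Definition Pm n (M K : 'M[C]_n) (s om : C) : 'M[C]_n := M + s *: (K + om *: M).

Ltac simp_ip := repeat progress (rewrite ?(mulmxDl, mulmxBl, mulNmx, mulmxDr, mulmxBr, mulmxN,
   ipDl, ipBl, ipNl, ipZl, ipDr, ipBr, ipNr, ipZr) -?scalemxAl -?scalemxAr).
Ltac pos := repeat (apply: addr_ge0 || apply: mulr_ge0 || apply: normr_ge0 || apply: qf_ge0 || assumption).

Lemma col_split n (x : 'cV[C]_(n + n)) : exists x1 x2, x = col_mx x1 x2.
Proof. by exists (usubmx x), (dsubmx x); rewrite vsubmxK. Qed.

Section Main.
Variables (n : nat) (M K : 'M[C]_n) (s om : C).
Hypotheses (hM : real_spd M) (hK : real_spd K) (s0 : 0 < s) (om0 : 0 <= om).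

Lemma calP_col (P : 'M[C]_n) (x1 x2 : 'cV[C]_n) : calP P *m col_mx x1 x2 = col_mx (P *m x1) (P *m x2).
Proof. by rewrite /calP mul_block_col !mul0mx addr0 add0r. Qed.

Lemma partB (x w : 'cV[C]_(n + n)) :
  `|ip (Am M K s om *m x) w| ^+ 2 <=
    ip (calP (Pm M K s om) *m x) x * ip (calP (Pm M K s om) *m w) w.
Proof.
have [x1 [x2 ->]] := col_split x; have [w1 [w2 ->]] := col_split w.
rewrite !calP_col !ip_col /Am mul_block_col !ip_col.
set m11 := ip (M *m x1) x1; set m22 := ip (M *m x2) x2.
set n11 := ip (M *m w1) w1; set n22 := ip (M *m w2) w2.
set k11 := ip (K *m x1) x1; set k22 := ip (K *m x2) x2.
set l11 := ip (K *m w1) w1; set l22 := ip (K *m w2) w2.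
set ks := `|s|; set ko := `|'i * om * s|.
have ksE : ks = s by rewrite /ks ger0_norm // ltW.
have koE : ko = om * s by rewrite /ko !normrM normCi mul1r !ger0_norm // ltW.
set c1 := ip (M *m x1) w1; set c2 := - ip (M *m x2) w2.
set c3 := s * ip (K *m x2) w1; set c4 := s * ip (K *m x1) w2.
set c5 := ('i * om * s) * ip (M *m x1) w2; set c6 := - ('i * om * s) * ip (M *m x2) w1.
have E : ip (M *m x1 + s *: (K - ('i * om) *: M) *m x2) w1 +
         ip (s *: (K + ('i * om) *: M) *m x1 + - M *m x2) w2 =
         (c1 + c2) + (c3 + c4) + (c5 + c6).
  by rewrite /c1 /c2 /c3 /c4 /c5 /c6; simp_ip; ring.
rewrite E.
have hMh := spd_herm hM; have hKh := spd_herm hK.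
have hMp := fun z => @spd_pos _ M z hM; have hKp := fun z => @spd_pos _ K z hK.
have b1 : `|c1| ^+ 2 <= m11 * n11 by exact: CS.
have b2 : `|c2| ^+ 2 <= m22 * n22 by rewrite normrN; exact: CS.
have b3 : `|c3| ^+ 2 <= (ks * k22) * (ks * l11) by apply: Lscale; exact: CS.
have b4 : `|c4| ^+ 2 <= (ks * k11) * (ks * l22) by apply: Lscale; exact: CS.
have b5 : `|c5| ^+ 2 <= (ko * m11) * (ko * n22) by apply: Lscale; exact: CS.
have b6 : `|c6| ^+ 2 <= (ko * m22) * (ko * n11).
  by rewrite /c6 mulNr normrN; apply: Lscale; exact: CS.
have B12 : `|c1 + c2| ^+ 2 <= (m11 + m22) * (n11 + n22) by apply: L2 => //; pos.
have B34 : `|c3 + c4| ^+ 2 <= (ks * k22 + ks * k11) * (ks * l11 + ks * l22) by apply: L2 => //; pos.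
have B56 : `|c5 + c6| ^+ 2 <= (ko * m11 + ko * m22) * (ko * n22 + ko * n11) by apply: L2 => //; pos.
have B : `|c1 + c2 + (c3 + c4) + (c5 + c6)| ^+ 2 <=
  ((m11 + m22) + (ks * k22 + ks * k11) + (ko * m11 + ko * m22)) *
  ((n11 + n22) + (ks * l11 + ks * l22) + (ko * n22 + ko * n11)).
  apply: L2 => //; try pos. apply: L2 => //; pos.
have EX : forall z1 z2, ip (Pm M K s om *m z1) z1 + ip (Pm M K s om *m z2) z2 =
   (ip (M *m z1) z1 + ip (M *m z2) z2) + (ks * ip (K *m z2) z2 + ks * ip (K *m z1) z1)
    + (ko * ip (M *m z1) z1 + ko * ip (M *m z2) z2).
  by move=> z1 z2; rewrite ksE koE /Pm; simp_ip; ring.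
rewrite EX EX.
apply: (le_trans B); rewrite le_eqVlt; apply/orP; left; apply/eqP.
rewrite /m11 /m22 /n11 /n22 /k11 /k22 /l11 /l22 /ks /ko; ring.
Qed.


Lemma herm_Am : herm (Am M K s om).
Proof.
have sr : s^* = s by apply: conj_Creal; apply: gtr0_real.
have omr : om^* = om by apply: conj_Creal; apply: ger0_real.
have ti : ('i * om)^* = - ('i * om).
  by rewrite rmorphM /= conjCi omr mulNr.
rewrite /herm /Am /adjm /cjm map_block_mx tr_block_mx.
rewrite -!/(cjm _) -!/(adjm _) ?adjmZ ?adjmD ?adjmB ?adjmN ?adjmZ.
by rewrite (spd_herm hM) (spd_herm hK) sr ti scaleNr opprK.
Qed.

Lemma herm_calP (P : 'M[C]_n) : real_spd P -> herm (calP P).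
Proof.
move=> hP; rewrite /herm /calP /adjm /cjm map_block_mx tr_block_mx.
by rewrite -!/(cjm _) -!/(adjm _) adjm0 (spd_herm hP).
Qed.

Lemma pos_calP (P : 'M[C]_n) (x : 'cV[C]_(n + n)) : real_spd P -> x != 0 ->
  0 < ip (calP P *m x) x.
Proof.
move=> hP; have [x1 [x2 ->]] := col_split x => nz.
rewrite calP_col ip_col.
case: (eqVneq x1 0) => [e1|n1]; last by apply: ltr_wpDr; [exact: qf_ge0 | exact: spd_pos].
case: (eqVneq x2 0) => [e2|n2]; last by apply: ltr_wpDl; [exact: qf_ge0 | exact: spd_pos].
by move: nz; rewrite e1 e2 col_mx0 eqxx.
Qed.

Lemma Pm_spd : real_spd (Pm M K s om).
Proof.
have sr : s \is Num.real by apply: gtr0_real.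
have omr : om \is Num.real by apply: ger0_real.
case: (hM) => hMr hMT hMp; case: (hK) => hKr hKT hKp.
split.
- by move=> i j; rewrite /Pm !mxE; apply: rpredD => //; apply: rpredM => //; apply: rpredD => //; apply: rpredM.
- have trZ : forall (k : C) (A : 'M[C]_n), (k *: A)^T = k *: A^T.
    by move=> k A; apply/matrixP=> i j; rewrite !mxE.
  by rewrite /Pm !linearD /= !trZ hMT hKT.
- move=> x xr nz; rewrite ip_realvec; last first.
    by apply/matrixP=> i j; rewrite /cjm mxE ord1 conj_Creal.
  rewrite /Pm; simp_ip.
  apply: ltr_wpDr; first by apply: mulr_ge0; [exact: ltW | pos].
  exact: spd_pos.
Qed.

End Main.

Lemma eig_right m (A Q : 'M[C]_m) lam : herm A -> herm Q -> Q \in unitmx ->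
  eigenvalue (invmx Q *m A) lam -> exists2 z : 'cV[C]_m, z != 0 & A *m z = lam^* *: (Q *m z).
Proof.
move=> hA hQ uQ /eigenvalueP [v hv vnz].
set u := v *m invmx Q.
have uQ' : u *m Q = v by rewrite /u mulmxKV.
have hu : u *m A = lam *: (u *m Q) by rewrite uQ' -hv /u mulmxA.
exists (adjm u).
  apply/eqP=> h; move/eqP: vnz; apply.
  have u0 : u = 0 by apply: adjm_inj; rewrite h adjm0.
  by rewrite -uQ' u0 mul0mx.
by rewrite -{1}hA -adjmM hu adjmZ adjmM hQ.
Qed.

Lemma eig_left m (A Q : 'M[C]_m) mu (z : 'cV[C]_m) : herm A -> herm Q -> Q \in unitmx ->
  z != 0 -> A *m z = mu *: (Q *m z) -> eigenvalue (invmx Q *m A) mu^*.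
Proof.
move=> hA hQ uQ nz hz; apply/eigenvalueP; exists (adjm z *m Q).
  rewrite mulmxA mulmxK // -{1}hA -adjmM hz adjmZ adjmM hQ //.
apply/eqP=> h; move/eqP: nz; apply.
have h2 : adjm z = 0 by rewrite -(mulmxK uQ (adjm z)) h mul0mx.
by apply: adjm_inj; rewrite h2 adjm0.
Qed.


Lemma unit_calP n (P : 'M[C]_n) : real_spd P -> calP P \in unitmx.
Proof.
move=> hP; rewrite -row_free_unit; apply: inj_row_free => v hv.
have hz : calP P *m adjm v = 0 by rewrite -{1}(herm_calP hP) -adjmM hv adjm0.
case: (eqVneq (adjm v) 0) => [h|nz].
  by apply: adjm_inj; rewrite h adjm0.
by have := pos_calP hP nz; rewrite hz ip0l ltxx.
Qed.

Lemma cj1i : (1 - 'i : C)^* = 1 + 'i.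
Proof. by rewrite rmorphB /= rmorph1 conjCi opprK. Qed.
Lemma cj1i' : (1 + 'i : C)^* = 1 - 'i.
Proof. by rewrite rmorphD /= rmorph1 conjCi. Qed.

Section Main2.
Variables (n : nat) (M K : 'M[C]_n) (s om : C).
Hypotheses (hM : real_spd M) (hK : real_spd K) (s0 : 0 < s) (om0 : 0 <= om).

Lemma eig_vec (P : 'M[C]_n) lam : real_spd P ->
  eigenvalue (invmx (calP P) *m Am M K s om) lam ->
  lam \is Num.real /\ exists2 z : 'cV[C]_(n + n), z != 0 & Am M K s om *m z = lam *: (calP P *m z).
Proof.
move=> hP hl.
have [z nz hz] := @eig_right (n + n) (Am M K s om) (calP P) lam (herm_Am hM hK s0 om0) (herm_calP hP) (unit_calP hP) hl.
have Xp := pos_calP hP nz.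
have E : ip (Am M K s om *m z) z = lam^* * ip (calP P *m z) z by rewrite hz ipZl.
have rA : ip (Am M K s om *m z) z \is Num.real.
  by apply/CrealP; rewrite ip_herm //; exact: herm_Am.
have rl : lam^* \is Num.real.
  have -> : lam^* = ip (Am M K s om *m z) z / ip (calP P *m z) z.
    by rewrite E mulfK // gt_eqF.
  by rewrite rpredM // rpredV gtr0_real.
have lr : lam \is Num.real by rewrite -CrealJ.
split=> //; exists z => //; by rewrite hz conj_Creal.
Qed.

Lemma part1 (P : 'M[C]_n) lam : real_spd P ->
  eigenvalue (invmx (calP P) *m Am M K s om) lam ->
  lam \is Num.real /\ eigenvalue (invmx (calP P) *m Am M K s om) (- lam).
Proof.
move=> hP hl; have [lr [z nz hz]] := eig_vec hP hl; split=> //.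
have [z1 [z2 Ez]] := col_split z; subst z.
set t := 'i * om.
have cl : lam^* = lam by exact: conj_Creal.
have cs : s^* = s by apply: conj_Creal; apply: gtr0_real.
have omr : om^* = om by apply: conj_Creal; apply: ger0_real.
have ct : t^* = - t by rewrite /t rmorphM /= conjCi omr mulNr.
have cM := spd_cjm hM; have cK := spd_cjm hK; have cP := spd_cjm hP.
set Bs := s *: (K - t *: M); set Bc := s *: (K + t *: M).
have cBs : cjm Bs = Bc by rewrite /Bs /Bc cjmZ cjmB cjmZ cM cK cs ct scaleNr opprK.
have cBc : cjm Bc = Bs by rewrite /Bs /Bc cjmZ cjmD cjmZ cM cK cs ct scaleNr.
move: hz; rewrite /Am -/t -/Bs -/Bc mul_block_col calP_col scale_col_mx => /eq_col_mx [E1 E2].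
have F1 : M *m cjm z1 + Bc *m cjm z2 = lam *: (P *m cjm z1).
  by move: (congr1 (@cjm _ _) E1); rewrite cjmD !cjmM cBs cjmZ cjmM cM cl cP.
have F2 : Bs *m cjm z1 - M *m cjm z2 = lam *: (P *m cjm z2).
  by move: (congr1 (@cjm _ _) E2); rewrite cjmD !cjmM cBc cjmN cjmZ cjmM cM cl cP mulNmx.
have -> : - lam = (- lam)^* by rewrite rmorphN /= cl.
apply: (@eig_left _ _ _ _ (col_mx (cjm z2) (- cjm z1))).
- exact: herm_Am.
- exact: herm_calP.
- exact: unit_calP.
- apply/eqP=> h; move/eqP: nz; apply.
  move: h; rewrite -col_mx0 => /eq_col_mx [h2 h1].
  have e1 : z1 = 0 by rewrite -(cjmK z1); move/eqP: h1; rewrite oppr_eq0 => /eqP ->; apply/matrixP=> i j; rewrite /cjm !mxE conjC0.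
  have e2 : z2 = 0 by rewrite -(cjmK z2) h2; apply/matrixP=> i j; rewrite /cjm !mxE conjC0.
  by rewrite e1 e2 col_mx0.
- rewrite /Am -/t -/Bs -/Bc mul_block_col calP_col scale_col_mx; congr col_mx.
    by rewrite mulmxN scaleNr -F2 opprB.
  by rewrite mulNmx !mulmxN opprK scalerN scaleNr opprK -F1 addrC.
Qed.


Lemma sqrt_pos (X : C) : 0 < X -> 0 < sqrtC X.
Proof. by rewrite sqrtC_gt0. Qed.

Lemma partA (x : 'cV[C]_(n + n)) : x != 0 ->
  exists2 w, w != 0 & 1 / sqrtC 3 <= rayq (Am M K s om) (calP (Pm M K s om)) x w.
Proof.
move=> nz.
have hP := Pm_spd hM hK s0 om0.
set P := Pm M K s om.
have Xp : 0 < ip (calP P *m x) x by exact: pos_calP.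
have [x1 [x2 Ex]] := col_split x.
set w := col_mx (x1 + (1 - 'i) *: x2) ((1 + 'i) *: x1 - x2).
set X := ip (calP P *m x) x.
set c := ip (Am M K s om *m x) w.
have hA := herm_Am hM hK s0 om0.
have cc : c^* = ip (Am M K s om *m w) x by rewrite /c ip_conj ip_adj hA.
have Ec : c + c^* = 2 * X.
  rewrite cc /c /X Ex /w calP_col /Am !mul_block_col !ip_col /P /Pm; simp_ip.
  rewrite ?cj1i ?cj1i'; by have := sqrCi'; move=> H; ring: H.
have EW : ip (calP P *m w) w = 3 * X.
  rewrite /w /X Ex !calP_col !ip_col; simp_ip.
  rewrite ?cj1i ?cj1i'; by have := sqrCi'; move=> H; ring: H.
have X3p : 0 < 3 * X by rewrite mulr_gt0.
exists w.
  apply/eqP=> h; move: X3p; rewrite -EW h mulmx0 ip0l ltxx //.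
have ReX : 'Re c = X by rewrite ReE Ec mulrC mulKf // pnatr_eq0.
have Xc : X <= `|c|.
  rewrite -ReX; apply: (le_trans (real_ler_norm (Creal_Re c))).
  exact: (leif_normC_Re_Creal c).1.
rewrite /rayq /pnorm !innerE -/X EW sqrtCM ?nnegrE ?(ltW Xp) //.
have s3 : 0 < sqrtC 3 :> C by rewrite sqrtC_gt0.
have sX : 0 < sqrtC X by rewrite sqrtC_gt0.
have -> : sqrtC X * (sqrtC 3 * sqrtC X) = sqrtC 3 * X.
  by rewrite mulrCA -expr2 sqrtCK.
rewrite ler_pdivlMr ?mulr_gt0 // mulrA mul1r mulVf ?gt_eqF // mul1r -/c.
exact: Xc.
Qed.

Lemma partB' (x w : 'cV[C]_(n + n)) : x != 0 -> w != 0 ->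
  rayq (Am M K s om) (calP (Pm M K s om)) x w <= 1.
Proof.
move=> nx nw.
have hP := Pm_spd hM hK s0 om0.
have Xp := pos_calP hP nx; have Wp := pos_calP hP nw.
rewrite /rayq /pnorm !innerE ler_pdivrMr ?mul1r ?mulr_gt0 ?sqrtC_gt0 //.
by apply: CS_sqrt; [exact: ltW | exact: ltW | exact: partB].
Qed.

Lemma partC lam : eigenvalue (invmx (calP (Pm M K s om)) *m Am M K s om) lam ->
  lam \is Num.real /\ 1 / sqrtC 3 <= `|lam| <= 1.
Proof.
move=> hl.
have hP := Pm_spd hM hK s0 om0.
have [lr [z nz hz]] := eig_vec hP hl.
split=> //.
set P := Pm M K s om.
have Xp : 0 < ip (calP P *m z) z by exact: pos_calP.
have hPh := herm_calP hP.
have hPp := fun v => @pos_calP _ _ v hP.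
apply/andP; split.
  have [w nw hw] := partA nz.
  apply: (le_trans hw).
  have Wp : 0 < ip (calP P *m w) w by exact: pos_calP.
  rewrite /rayq /pnorm !innerE hz ipZl normrM ler_pdivrMr ?mulr_gt0 ?sqrtC_gt0 //.
  rewrite ler_wpM2l //; apply: CS_sqrt; [exact: ltW | exact: ltW | exact: CS].
have := partB' nz nz.
rewrite /rayq /pnorm !innerE hz ipZl normrM -expr2 sqrtCK.
by rewrite (ger0_norm (ltW Xp)) mulfK ?gt_eqF.
Qed.

End Main2.
End Lin.

Unset Implicit Arguments.
Theorem theorem5 (C : numClosedFieldType) (n : nat) (M K : 'M[C]_n) (nu om : C) :
  real_spd M -> real_spd K ->
  nu \is Num.real -> 0 < nu -> om \is Num.real -> 0 <= om ->
  (forall P : 'M[C]_n, real_spd P ->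
     forall lam : C, eigenvalue (invmx (calP P) *m calM M K nu om) lam ->
       lam \is Num.real /\ eigenvalue (invmx (calP P) *m calM M K nu om) (- lam))
  /\
  (let P := M + sqrtC nu *: (K + om *: M) in
   let A := calM M K nu om in
   let PP := calP P in
   (forall x : 'cV[C]_(n + n), x != 0 ->
      forall c : C, c \is Num.real -> c < 1 / sqrtC 3 ->
        exists2 w : 'cV[C]_(n + n), w != 0 & c < rayq A PP x w)
   /\
   (forall x w : 'cV[C]_(n + n), x != 0 -> w != 0 -> rayq A PP x w <= 1)
   /\
   (forall lam : C, eigenvalue (invmx PP *m A) lam ->
      lam \is Num.real /\ 1 / sqrtC 3 <= `|lam| <= 1)).
Proof.
move=> hM hK _ nu0 _ om0.
have s0 : 0 < sqrtC nu by rewrite sqrtC_gt0.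
split.
  move=> P hP lam hl; exact: (part1 hM hK s0 om0 hP hl).
split.
  move=> x nz c _ hc.
  have [w nw hw] := partA hM hK s0 om0 nz.
  by exists w => //; exact: lt_le_trans hc hw.
split.
  move=> x w nx nw; exact: (partB' hM hK s0 om0 nx nw).
move=> lam hl; exact: (partC hM hK s0 om0 hl).
Qed.
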